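(* Let $n\ge 1$ and $m\ge 2$ be integers with $m\nmid n$, and let $\ell=\lfloor n/m\rfloor$. Then $k=\ell+1$ is the smallest nonnegative integer $k$ for which $\theta_{m,k}=\mathbf{0}$ (the map sending every $x\in\mathbb{F}_2^n$ to the zero vector).
   Context: For $x=(x_0,\dots,x_{n-1})\in\mathbb{F}_2^n$, indices of coordinates are taken modulo $n$. For a nonnegative integer $k$, the map $\theta_{m,k}\colon\mathbb{F}_2^n\to\mathbb{F}_2^n$ is defined by $\theta_{m,k}(x)=y$ with $y_i=x_{i+mk}\prod_{1\le j\le mk-1,\ m\nmid j}(x_{i+j}+1)$ for $i\in\{0,\dots,n-1\}$ (for $k=0$ the empty product is $1$, so $\theta_{m,0}$ is the identity map). *)

(* Defs.v *)
From HB Require Import structures.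
From mathcomp Require Import all_boot all_order all_algebra.
Set Implicit Arguments. Unset Strict Implicit. Unset Printing Implicit Defensive.
Import GRing.Theory.
Local Open Scope ring_scope.

Lemma ord_pos (n : nat) (i : 'I_n) : (0 < n)%N.
Proof. by case: i => i /= /(leq_ltn_trans (leq0n i)). Qed.

Definition shift (n : nat) (i : 'I_n) (j : nat) : 'I_n :=
  Ordinal (ltn_pmod (i + j) (ord_pos i)).

Definition theta (n m k : nat) (x : {ffun 'I_n -> 'F_2}) : {ffun 'I_n -> 'F_2} :=
  [ffun i => x (shift i (m * k)) *
     \prod_(1 <= j < m * k | ~~ (m %| j)%N) (x (shift i j) + 1)].

Definition theta_is_zero (n m k : nat) : Prop :=
  forall x : {ffun 'I_n -> 'F_2}, theta m k x = 0.

(* Main.v *)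
Require Import Defs.
From mathcomp Require Import all_boot all_order all_algebra.
From mathcomp Require Import zify.
Import GRing.Theory.

Lemma F2_aux : forall a : 'F_2, (a * (a+1) = 0)%R.
Proof. by case=> [[|[|a]]] //= H; apply/val_inj. Qed.

Theorem corollary1 (n m : nat) :
  (1 <= n)%N -> (2 <= m)%N -> ~~ (m %| n)%N ->
  theta_is_zero n m (n %/ m).+1 /\
  (forall k : nat, theta_is_zero n m k -> ((n %/ m).+1 <= k)%N).
Proof.
move=> n1 m2 ndiv.
have Hdm := divn_eq n m.
have Hlt : (n %% m < m)%N by rewrite ltn_mod; lia.
have Hmpos : (0 < n %% m)%N.
  rewrite lt0n; apply: contra ndiv => /eqP H; apply/dvdnP; exists (n %/ m); by rewrite {1}Hdm H addn0.
split.
- move=> x; apply/ffunP => i; rewrite !ffunE.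
  set K := (m * (n %/ m).+1)%N.
  have HK : (n < K)%N by rewrite /K mulnS; lia.
  set j0 := (K - n)%N.
  have Hj0 : shift i j0 = shift i K.
    apply/val_inj => /=.
    have -> : (i + K = (i + j0) + n)%N by rewrite /j0; lia.
    by rewrite modnDr.
  have j0in : j0 \in [seq j <- index_iota 1 K | ~~ (m %| j)%N].
    rewrite mem_filter mem_index_iota.
    apply/andP; split; last by rewrite /j0; lia.
    have -> : j0 = (m - n %% m)%N by rewrite /j0 /K mulnS; lia.
    apply/negP => /dvdn_leq; lia.
  rewrite -big_filter (bigD1_seq j0) //=; last by apply: filter_uniq; apply: iota_uniq.
  by rewrite Hj0 mulrA F2_aux mul0r.
- move=> k Hk; rewrite ltnNge; apply/negP => kle.
  have Hmk : (m * k < n)%N.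
    have : (m * k <= m * (n %/ m))%N by rewrite leq_mul2l kle orbT.
    lia.
  pose i0 : 'I_n := Ordinal n1.
  pose x : {ffun 'I_n -> 'F_2} := [ffun p : 'I_n => (((m %| p)%N)%:R)%R].
  have := Hk x; move/ffunP/(_ i0); rewrite !ffunE.
  have -> : ((shift i0 (m * k)) = m * k :> nat)%N by rewrite /= add0n modn_small.
  rewrite dvdn_mulr // big_nat_cond big1 ?mulr1 //=.
  move=> j /andP[/andP[j1 j2] jd].
  rewrite ffunE /= add0n modn_small; last by lia.
  by rewrite (negbTE jd) add0r.
Qed.
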